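(* Let $k\ge 2$ and let $\mathbb{R}^+=H_1\sqcup\cdots\sqcup H_k$ be a partition of the positive reals into pairwise disjoint nonempty subsets, each closed under addition and multiplication. Then at least one of the sets $H_i$ is not Lebesgue measurable. *)

(* Defs.v *)
From HB Require Import structures.
From mathcomp Require Import all_boot all_order all_algebra.
From mathcomp Require Import all_classical all_reals all_analysis.
Set Implicit Arguments. Unset Strict Implicit. Unset Printing Implicit Defensive.
Import Order.TTheory GRing.Theory Num.Theory.
Local Open Scope classical_set_scope.
Local Open Scope ring_scope.

(* A ⊆ ℝ is Lebesgue measurable iff it is Carathéodory-measurable for the
   Lebesgue outer measure (the outer measure induced by interval length);
   this is the domain of the library's completed_lebesgue_measure. *)
Definition lebesgue_measurable {R : realType} (A : set R) : Prop :=
  ((@wlength R idfun)^*%mu).-cara.-measurable A.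

(* Main.v *)
Require Import Defs.
From HB Require Import structures.
From mathcomp Require Import all_boot all_order all_algebra.
From mathcomp Require Import all_classical all_reals all_analysis measurable_realfun lebesgue_integral_differentiation lra.
Set Implicit Arguments. Unset Strict Implicit. Unset Printing Implicit Defensive.
Import Order.TTheory GRing.Theory Num.Theory.
Import numFieldNormedType.Exports.
Local Open Scope classical_set_scope.
Local Open Scope ring_scope.

Section S.
Context {R : realType}.
Local Notation mu := (@lebesgue_measure R).

Lemma refl_measure (t : R) (A : set R) : measurable A ->
  mu ((fun y => t - y) @^-1` A) = mu A.
Proof.
move=> mA.
have mf : measurable_fun [set: R] (fun y : R => t - y).
  by apply: measurable_funB => //; exact: measurable_cst.
change (pushforward mu ((fun y => t - y) : _ -> measurableTypeR R) A = mu A).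
apply/esym/lebesgue_measure_unique => //= _ [[a b]] _ <-.
rewrite /pushforward /=.
have -> : (fun y : R => t - y) @^-1` `]a, b] = `[t - b, t - a[%classic.
  apply/seteqP; split => y /=; rewrite !in_itv /=.
    by move=> /andP[h1 h2]; apply/andP; split; lra.
  by move=> /andP[h1 h2]; apply/andP; split; lra.
rewrite !lebesgue_measure_itv /= !lte_fin.
have -> : (t - b < t - a) = (a < b) by apply/idP/idP => h; lra.
case: ifP => // _; congr (_%:E); lra.
Qed.


Lemma ballRE (x r y : R) : ball x r y = (x - r < y < x + r).
Proof. by rewrite /ball /= ltr_distlC. Qed.

Lemma steinhaus (X : set R) (x r : R) : measurable X -> 0 < r ->
  ((3/2 * r)%:E < mu (X `&` ball x r))%E ->
  forall t, x * 2 - r / 2 < t < x * 2 + r / 2 -> exists a, X a /\ X (t - a).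
Proof.
move=> mX r0 muS t ht; apply: contrapT => hne.
pose S := X `&` ball x r.
have mS : measurable S by apply: measurableI => //; exact: measurable_ball.
pose S' := (fun y => t - y) @^-1` S.
have mS' : measurable S'.
  have mf : measurable_fun [set: R] (fun y : R => t - y).
    by apply: measurable_funB => //; exact: measurable_cst.
  by rewrite -[S']setTI; apply: mf.
have dis : S `&` S' = set0.
  apply/seteqP; split => // y [[Xy _] [Xty _]]; apply: hne; exists y; split => //.
have sub : S `|` S' `<=` ball x (r + r / 2).
  move=> y; rewrite /S' /S /=; rewrite !ballRE.
  case=> [[_ /andP[h1 h2]]|[_ /andP[h1 h2]]]; apply/andP; split; lra.
have hU : (mu (S `|` S') = mu S + mu S')%E := measureU mu mS mS' dis.
have eS : mu S' = mu S by exact: refl_measure.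
rewrite eS in hU.
have hle : (mu (S `|` S') <= mu (ball x (r + r / 2)))%E.
  by apply: le_measure => //; rewrite inE //; [exact: measurableU|exact: measurable_ball].
rewrite hU lebesgue_measure_ball in hle; last lra.
move: muS hle; rewrite -/S.
case: (mu S) (measure_ge0 mu S) => [s| |] //= _.
rewrite lte_fin -EFinD lee_fin => hs hle.
rewrite mulr2n in hle; lra.
Qed.

Lemma density_point (X : set R) : measurable X -> (0 < mu X)%E ->
  exists x r, X x /\ 0 < r /\ ((3/2 * r)%:E < mu (X `&` ball x r))%E.
Proof.
move=> mX mX0.
have hd := lebesgue_density mX.
have [x [Xx Px]] : exists x, X x /\
   ((mu (X `&` ball x r) / mu (ball x r))%E @[r --> 0^'+] --> (\1_X x)%:E).
  apply: contrapT => hno.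
  have hn : mu.-negligible X.
    apply: negligibleS hd => y Xy /= Py; apply: hno; exists y; split => //.
  by move/(negligibleP mu mX): hn => h; rewrite h ltxx in mX0.
rewrite indicE mem_set // in Px.
move/fine_cvgP: Px => [hfin hcv].
have h34 : (3/4 : R) < true%:R by rewrite /=; lra.
have hgt := cvgr_gt _ hcv (3/4) h34.
have : \forall r \near 0^'+, 0 < r /\
    (mu (X `&` ball x r) / mu (ball x r))%E \is a fin_num /\
    3/4 < fine (mu (X `&` ball x r) / mu (ball x r))%E.
  near=> r; split; [near: r; exact: nbhs_right_gt|split].
    by near: r; exact: hfin.
  by near: r; exact: hgt.
move=> /filter_ex [r [r0 [fin gt]]].
exists x, r; split => //; split => //.
move: fin gt; rewrite lebesgue_measure_ball; last exact: ltW.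
rewrite inver (negbTE (lt0r_neq0 _)); last by rewrite mulr2n; lra.
have h0 : (0 <= mu (X `&` ball x r))%E := measure_ge0 mu _.
case E : (mu (X `&` ball x r)) => [s| |] /=.
  rewrite lte_fin => _; rewrite ltr_pdivlMr; last by rewrite mulr2n; lra.
  rewrite mulr2n; lra.
  by move=> *; rewrite ltry.
by rewrite E in h0.
Unshelve. all: by end_near.
Qed.
End S.

Unset Implicit Arguments.
Theorem theorem3p3 (R : realType) (k : nat) (H : 'I_k -> set R) :
  (2 <= k)%N ->
  (forall i, H i !=set0) ->
  (forall i j, i != j -> H i `&` H j = set0) ->
  \bigcup_(i in setT) H i = [set x : R | 0 < x] ->
  (forall i x y, H i x -> H i y -> H i (x + y)) ->
  (forall i x y, H i x -> H i y -> H i (x * y)) ->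
  exists i, ~ lebesgue_measurable (H i).
Proof.
move=> k2 ne dis cov add mul.
apply: contrapT => hall.
have meas i : lebesgue_measurable (H i).
  by apply: contrapT => h; apply: hall; exists i.
have pos l z : H l z -> 0 < z.
  move=> Hz; have : (\bigcup_(i in setT) H i) z by exists l.
  by rewrite cov.
have cover z : 0 < z -> exists l, H l z.
  move=> z0; have : [set x : R | 0 < x] z by [].
  by rewrite -cov => -[l _ Hz]; exists l.
have uniq l l' z : H l z -> H l' z -> l = l'.
  move=> h1 h2; case: (eqVneq l l') => // nl.
  have : (H l `&` H l') z by split.
  by rewrite dis.
have mult l z n : H l z -> H l (z *+ n.+1).
  move=> Hz; elim: n => [|n IH]; first by rewrite mulr1n.
  by rewrite mulrS; apply: add.
have dec i : exists X, measurable X /\ X `<=` H i /\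
    exists N, (@lebesgue_measure R).-negligible N /\ H i `<=` X `|` N.
  have := meas i; rewrite /lebesgue_measurable -completed_caratheodory_measurable.
  rewrite g_sigma_completed_algebra_genE.
  case=> X mX [N nN] hXN; exists X; split => //; split.
    by rewrite -hXN; exact: subsetUl.
  by exists N; split => //; rewrite -hXN.
have [i [X [mX [XH X0]]]] : exists i X, measurable X /\ X `<=` H i /\
    (0 < (@lebesgue_measure R) X)%E.
  apply: contrapT => hno.
  have negH i : (@lebesgue_measure R).-negligible (H i).
    have [X [mX [XH [N [nN HXN]]]]] := dec i.
    apply: (@negligibleS _ (measurableTypeR R) R (@lebesgue_measure R) _ _ HXN); apply: negligibleU => //.
    apply/negligibleP => //.
    have h0 : (0 <= (@lebesgue_measure R) X)%E := measure_ge0 _ _.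
    apply/eqP; rewrite eq_le h0 andbT leNgt; apply/negP => h.
    by apply: hno; exists i, X.
  pose F n : set R := if insub n is Some j then H j else set0.
  have nF : (@lebesgue_measure R).-negligible (\bigcup_n F n).
    apply: negligible_bigcup => n; rewrite /F; case: insub => [j|] //.
    exact: negligible_set0.
  have sub : ball (1:R) 1 `<=` \bigcup_n F n.
    move=> y; rewrite ballRE => /andP[h1 h2].
    have [l Hl] := cover y ltac:(lra).
    by exists (val l) => //; rewrite /F valK.
  have := @negligibleS _ (measurableTypeR R) R (@lebesgue_measure R) _ _ sub nF.
  move/(negligibleP (@lebesgue_measure R) (measurable_ball (1:R) 1)).
  move=> h; have := etrans (esym (lebesgue_measure_ball (1:R) ler01)) h.
  by move/eqP; rewrite eqe pnatr_eq0.
have [x [r [Xx [r0 hS]]]] := density_point mX X0.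
have interval t : x * 2 - r / 2 < t < x * 2 + r / 2 -> H i t.
  move=> ht; have [a [Xa Xta]] := steinhaus mX r0 hS ht.
  have -> : t = a + (t - a) by rewrite addrC subrK.
  by apply: add; apply: XH.
have x0 : 0 < x := pos i x (XH x Xx).
have [j ji] : exists j : 'I_k, j != i.
  have k0 : (0 < k)%N by apply: leq_trans k2.
  case: (eqVneq i (Ordinal k0)) => [->|h]; last by exists (Ordinal k0); rewrite eq_sym.
  by exists (Ordinal k2).
have [y Hy] := ne j.
have y0 := pos j y Hy.
have d0 : 0 < r / 2 by lra.
pose n := Num.Def.trunc (y / (r / 2)).
have hn : y / (r / 2) < n.+1%:R.
  by have /andP[_ ->] := truncn_itv (ltW (divr_gt0 y0 d0)).
pose z := y / n.+1%:R.
have n0 : 0 < n.+1%:R :> R by rewrite ltr0n.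
have z0 : 0 < z by apply: divr_gt0.
have zd : z < r / 2.
  by rewrite /z ltr_pdivrMr // mulrC -ltr_pdivrMr.
have Hz : H j z.
  have [l Hl] := cover z z0.
  have := mult l z n Hl.
  have -> : z *+ n.+1 = y by rewrite -mulr_natr /z divfK // gt_eqF.
  by move=> Hly; rewrite (uniq _ _ _ Hly Hy) in Hl.
pose m := Num.Def.trunc (x * 2 / z).
have /andP[hm1 hm2] := truncn_itv (ltW (divr_gt0 (mulr_gt0 x0 (ltr0Sn R 1)) z0)).
rewrite -/m ler_pdivlMr // in hm1.
rewrite -/m ltr_pdivrMr // in hm2.
have w_in : x * 2 - r / 2 < z *+ m.+1 < x * 2 + r / 2.
  have -> : z *+ m.+1 = m%:R * z + z by rewrite mulrS addrC mulr_natl.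
  rewrite -(natr1 m) mulrDl mul1r in hm2.
  apply/andP; split; lra.
have := uniq _ _ _ (interval _ w_in) (mult j z m Hz).
by move=> eij; rewrite eij eqxx in ji.
Qed.
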